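(* Under any feasible prescription strategy, the local state $X_t^1$ and the local mode $M_t^1$ are conditionally independent given the common information $H_t^0$.
   Context: Two-plant switched linear system $X_{t+1}=A(M_t^{0:1})X_t+B(M_t^{0:1})U_t+W_t$, $t=0,\dots,T$, with global/local states $X_t^0,X_t^1$, global/local modes $M_t^0,M_t^1$ (finite sets), actions $U_t^0,U_t^1$; the random variables $X_0^n$, $W_t^n$, $M_t^n$ ($n=0,1$, all $t$) are mutually independent (in particular the modes are independent over time and of each other). Packet-drop indicator $\Gamma_t$ i.i.d. Bernoulli, independent of everything else; $Z_t=X_t^1$, $\tilde Z_t=M_t^1$ if $\Gamma_t=1$ and $Z_t=\tilde Z_t=\emptyset$ if $\Gamma_t=0$. Common information $H_t^0=\{X_{0:t}^0,M_{0:t}^0,Z_{0:t},\tilde Z_{0:t},U_{0:t-1}^0\}$. A feasible prescription strategy chooses, as functions of $H_t^0$, the global action $U_t^0$ and a measurable map $\rho_t$ with $U_t^1=\rho_t(X_t^1,M_t^1)$, such that all states and actions have finite second moments. *)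

(* Defs.v *)
From HB Require Import structures.
From mathcomp Require Import all_boot all_order all_algebra.
From mathcomp Require Import all_classical all_reals all_analysis.
Set Implicit Arguments. Unset Strict Implicit. Unset Printing Implicit Defensive.
Import Order.TTheory GRing.Theory Num.Theory.
Local Open Scope classical_set_scope.
Local Open Scope ring_scope.

Section Defs.
Context {d : measure_display} {Omega : measurableType d} {R : realType}.
Variable P : probability Omega R.

Definition sigma_gen (G : set (set Omega)) : set (set Omega) :=
  smallest (sigma_algebra setT) G.

Definition ev_vec n (X : Omega -> 'cV[R]_n) : set (set Omega) :=
  [set E | exists (i : 'I_n) (B : set R), measurable B /\
           E = (fun w => X w i ord0) @^-1` B].

Definition ev_fin (K : finType) (M : Omega -> K) : set (set Omega) :=
  [set E | exists k : K, E = M @^-1` [set k]].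

Definition ev_bool (g : Omega -> bool) : set (set Omega) :=
  [set E | E = g @^-1` [set true]].

(* events of a variable observed only when g = true
   (Z = X if g, Z = "empty" otherwise): together with ev_bool g
   these generate sigma(Z) *)
Definition ev_masked (g : Omega -> bool) (G : set (set Omega)) : set (set Omega) :=
  [set E | exists E', G E' /\ E = (g @^-1` [set true]) `&` E'].

Definition meas_vec n (X : Omega -> 'cV[R]_n) :=
  forall i : 'I_n, measurable_fun setT (fun w => X w i ord0).
Definition meas_fin (K : finType) (M : Omega -> K) :=
  forall k : K, measurable (M @^-1` [set k]).
Definition meas_bool (g : Omega -> bool) := measurable (g @^-1` [set true]).

Definition vec_meas_wrt (F : set (set Omega)) n (X : Omega -> 'cV[R]_n) :=
  forall (i : 'I_n) (B : set R), measurable B ->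
    F ((fun w => X w i ord0) @^-1` B).

Definition second_moment n (X : Omega -> 'cV[R]_n) :=
  forall i : 'I_n, P.-integrable setT (fun w => ((X w i ord0) ^+ 2)%:E).

Definition mutually_independent (I : eqType) (S : set I)
    (F : I -> set (set Omega)) :=
  forall (J : seq I) (A : I -> set Omega), uniq J ->
    (forall j, j \in J -> S j /\ F j (A j)) ->
    P [set w | forall j, j \in J -> A j w] = (\prod_(j <- J) P (A j))%E.

Definition cond_exp_version (G : set (set Omega)) (f Y : Omega -> R) :=
  [/\ (forall B : set R, measurable B -> G (Y @^-1` B)),
      P.-integrable setT (fun w => (Y w)%:E) &
      forall C, G C ->
        (\int[P]_(w in C) (Y w)%:E = \int[P]_(w in C) (f w)%:E)%E].

Definition cond_indep (G F1 F2 : set (set Omega)) :=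
  forall A B, F1 A -> F2 B ->
    exists YA YB : Omega -> R,
      [/\ cond_exp_version G (\1_A) YA,
          cond_exp_version G (\1_B) YB &
          cond_exp_version G (\1_(A `&` B)) (YA \* YB)].

(* generators of the common information
   H_t^0 = {X^0_{0:t}, M^0_{0:t}, Z_{0:t}, Zt_{0:t}, U^0_{0:t-1}} *)
Definition common_info_gen n0 n1 m0 (K0 K1 : finType)
    (X0 : nat -> Omega -> 'cV[R]_n0) (X1 : nat -> Omega -> 'cV[R]_n1)
    (M0 : nat -> Omega -> K0) (M1 : nat -> Omega -> K1)
    (Gam : nat -> Omega -> bool) (U0 : nat -> Omega -> 'cV[R]_m0)
    (t : nat) : set (set Omega) :=
  [set E | exists s, (s <= t)%N /\
     (ev_vec (X0 s) E \/ ev_fin (M0 s) E \/ ev_bool (Gam s) E \/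
      ev_masked (Gam s) (ev_vec (X1 s)) E \/
      ev_masked (Gam s) (ev_fin (M1 s)) E \/
      ((s < t)%N /\ ev_vec (U0 s) E))].

End Defs.

(* index set of the primitive random variables:
   inl (inl n)        : X_0^n
   inl (inr (n, t))   : W_t^n
   inr (inl (n, t))   : M_t^n
   inr (inr t)        : Gamma_t
   (n = false is plant 0 / global, n = true is plant 1 / local) *)
Definition prim_index : eqType := ((bool + (bool * nat)) + ((bool * nat) + nat))%type.

Section Prim.
Context {d : measure_display} {Omega : measurableType d} {R : realType}.

Definition prim_sigma n0 n1 (K0 K1 : finType)
    (X00 : Omega -> 'cV[R]_n0) (X10 : Omega -> 'cV[R]_n1)
    (W0 : nat -> Omega -> 'cV[R]_n0) (W1 : nat -> Omega -> 'cV[R]_n1)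
    (M0 : nat -> Omega -> K0) (M1 : nat -> Omega -> K1)
    (Gam : nat -> Omega -> bool) (i : prim_index) : set (set Omega) :=
  match i with
  | inl (inl false) => sigma_gen (ev_vec X00)
  | inl (inl true) => sigma_gen (ev_vec X10)
  | inl (inr (false, t)) => sigma_gen (ev_vec (W0 t))
  | inl (inr (true, t)) => sigma_gen (ev_vec (W1 t))
  | inr (inl (false, t)) => sigma_gen (ev_fin (M0 t))
  | inr (inl (true, t)) => sigma_gen (ev_fin (M1 t))
  | inr (inr t) => sigma_gen (ev_bool (Gam t))
  end.

Definition prim_upto (T : nat) : set prim_index :=
  [set i | match i with
           | inl (inl _) => True
           | inl (inr (_, t)) => (t <= T)%N
           | inr (inl (_, t)) => (t <= T)%N
           | inr (inr t) => (t <= T)%N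
           end].
End Prim.

(* Main.v *)
From HB Require Import structures.
From mathcomp Require Import all_boot all_order all_algebra.
From mathcomp Require Import all_classical all_reals all_analysis.
From mathcomp Require Import measurable_realfun.
From mathcomp Require Import lra zify.
Require Import Defs.
Import Order.TTheory GRing.Theory Num.Theory.
Local Open Scope classical_set_scope.
Local Open Scope ring_scope.

Ltac setsolve := apply/seteqP; split => ? /=; tauto.

Section CE.
Context {d : measure_display} {Omega : measurableType d} {R : realType}.
Variable P : probability Omega R.
Variable Ggen : set (set Omega).
Hypothesis HG : forall C, sigma_gen Ggen C -> measurable C.
Let gT := g_sigma_algebraType Ggen.

Let idm : Omega -> gT := id.
Let midm : measurable_fun setT idm.
Proof. by move=> _ C mC; rewrite setTI; exact: HG. Qed.

Definition muG : set gT -> \bar R := fun C => P C.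

Let muG0 : muG set0 = 0%E. Proof. exact: measure0. Qed.
Let muG_ge0 C : (0 <= muG C)%E. Proof. exact: measure_ge0. Qed.
Let muG_sa : semi_sigma_additive muG.
Proof.
move=> F mF tF mU; apply: (@measure_semi_sigma_additive _ _ _ P) => //.
- by move=> n; apply: HG; exact: mF.
- exact: HG.
Qed.
HB.instance Definition _ := isMeasure.Build _ _ _ muG muG0 muG_ge0 muG_sa.
Let muG_fin : fin_num_fun muG.
Proof. by move=> C mC; apply: (@fin_num_measure _ _ _ P); exact: HG. Qed.
HB.instance Definition _ := Measure_isFinite.Build _ _ _ muG muG_fin.


Variable A : set Omega.
Hypothesis mA : measurable A.

Definition nuG : set gT -> \bar R := fun C => P (C `&` A).
Let nuG0 : nuG set0 = 0%E. Proof. by rewrite /nuG set0I measure0. Qed.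
Let nuG_ge0 C : (0 <= nuG C)%E. Proof. exact: measure_ge0. Qed.
Let nuG_sa : semi_sigma_additive nuG.
Proof.
move=> F mF tF mU; rewrite /nuG setI_bigcupl.
apply: (@measure_semi_sigma_additive _ _ _ P (fun n => F n `&` A)).
- by move=> n; apply: measurableI => //; apply: HG; exact: mF.
- apply/trivIsetP => i j _ _ ij.
  move/trivIsetP : tF => /(_ i j Logic.I Logic.I ij).
  by rewrite setIACA => ->; rewrite set0I.
- by rewrite -setI_bigcupl; apply: measurableI => //; exact: HG.
Qed.
HB.instance Definition _ := isMeasure.Build _ _ _ nuG nuG0 nuG_ge0 nuG_sa.
Let nuG_fin : fin_num_fun nuG.
Proof. by move=> C mC; apply: (@fin_num_measure _ _ _ P); apply: measurableI => //; exact: HG. Qed.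
HB.instance Definition _ := Measure_isFinite.Build _ _ _ nuG nuG_fin.

Let numu : nuG `<< muG.
Proof.
move=> N N0 C mC CN; apply/eqP; rewrite eq_le measure_ge0 andbT.
rewrite -(N0 C mC CN) /nuG /muG; apply: le_measure; rewrite ?inE //.
- by apply: measurableI => //; exact: HG.
- exact: HG.
Qed.

Lemma CE_exists : exists Y : Omega -> R,
  (forall w, 0 <= Y w) /\ cond_exp_version P (sigma_gen Ggen) (\1_A) Y.
Proof.
have [f [f0 ffin fint fE]] := radon_nikodym_sigma_finite numu.
have mf := measurable_int _ fint.
have fE' : (fun w => (fine (f w))%:E) = f.
  by apply: funext => w; rewrite fineK.
have fintP : P.-integrable setT (f \o idm).
  apply/integrableP; split.
    exact: (measurableT_comp mf midm).
  move/integrableP: (fint) => [_ fint'].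
  rewrite -(@ge0_integral_pushforward _ _ _ _ _ idm midm P setT (fun x => `|f x|)%E) //.
  exact: measurableT_comp.
exists (fun w => fine (f w)); split; first by move=> w; exact: fine_ge0.
split.
- move=> B mB.
  have mY : measurable_fun setT (fun w : gT => fine (f w)).
    by apply/measurable_EFinP; rewrite (_ : EFin \o _ = f).
  have := mY measurableT B mB.
  by rewrite setTI.
- by rewrite fE'.
- move=> C GC /=.
  rewrite fE' integral_indic //.
  transitivity (nuG C); last by rewrite /nuG setIC.
  apply/esym; etransitivity; first exact: (fE C GC).
  rewrite (@integral_pushforward _ _ _ _ _ idm midm P C f mf) //.
  - apply: (@integrableS _ _ _ P setT (idm @^-1` C) (f \o idm) measurableT _ (@subsetT _ _) fintP).
    exact: (HG C GC).
  - exact: (HG C GC).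
Qed.
End CE.



Section Main.
Context {d : measure_display} {Omega : measurableType d} {R : realType}.
Variable P : probability Omega R.
Variable Ggen : set (set Omega).
Hypothesis HG : forall C, sigma_gen Ggen C -> measurable C.
Let gT := g_sigma_algebraType Ggen.

Lemma gmeasP (Y : Omega -> R) :
  (forall B, measurable B -> sigma_gen Ggen (Y @^-1` B)) <->
  measurable_fun (setT : set gT) Y.
Proof.
split => [h _ B mB|h B mB]; first by rewrite setTI; exact: h.
by have := h measurableT B mB; rewrite setTI.
Qed.

Lemma int_indicM (Y : Omega -> R) (S : set Omega) :
  P.-integrable setT (fun w => (Y w)%:E) -> measurable S ->
  P.-integrable setT (fun w => (Y w * \1_S w)%:E).
Proof.
move=> iY mS; apply: (@le_integrable _ _ _ P setT measurableT _ (fun w => (Y w)%:E)) => //.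
- apply/(measurable_EFinP _ (fun w => Y w * \1_S w)); apply: measurable_funM.
    by apply/measurable_EFinP; exact: (measurable_int _ iY).
  exact: measurable_indic.
- move=> w _; rewrite !abse_EFin lee_fin normrM indicE.
  by case: (w \in S); rewrite ?normr1 ?normr0 ?mulr1 ?mulr0.
Qed.

Lemma integral_indicM (Y : Omega -> R) (S C : set Omega) :
  (\int[P]_(w in C) (Y w * \1_S w)%:E = \int[P]_(w in C `&` S) (Y w)%:E)%E.
Proof.
rewrite integral_mkcondr; apply: eq_integral => w _.
by rewrite /patch indicE; case: (w \in S); rewrite ?mulr1 ?mulr0.
Qed.


Lemma measure_split (X Gm : set Omega) : measurable X -> measurable Gm ->
  P X = (P (X `&` Gm) + P (X `&` ~` Gm))%E.
Proof.
move=> mX mG; rewrite -measureU.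
- by rewrite -setIUr setUv setIT.
- exact: measurableI.
- by apply: measurableI => //; exact: measurableC.
- by setsolve.
Qed.

Lemma main_abstract (Gam A B : set Omega) :
  sigma_gen Ggen Gam -> measurable A -> measurable B ->
  sigma_gen Ggen (Gam `&` B) ->
  (forall C, sigma_gen Ggen C ->
     P (A `&` B `&` C `&` ~` Gam) = (P B * P (A `&` C `&` ~` Gam))%E) ->
  (forall C, sigma_gen Ggen C ->
     P (B `&` C `&` ~` Gam) = (P B * P (C `&` ~` Gam))%E) ->
  exists YA YB : Omega -> R,
    [/\ cond_exp_version P (sigma_gen Ggen) (\1_A) YA,
        cond_exp_version P (sigma_gen Ggen) (\1_B) YB &
        cond_exp_version P (sigma_gen Ggen) (\1_(A `&` B)) (YA \* YB)].
Proof.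
move=> GGam mA mB GGB ind1 ind2.
have mGam := HG _ GGam.
have GnGam : sigma_gen Ggen (~` Gam) by exact: (@measurableC _ gT Gam GGam).
have [YA [YA0 [mYA iYA eYA]]] := @CE_exists _ _ _ P Ggen HG A mA.
set pb := fine (P B).
have PBE : P B = pb%:E by rewrite fineK // fin_num_measure.
pose YB w := \1_(Gam `&` B) w + pb * \1_(~` Gam) w.
have mYBg : measurable_fun (setT : set gT) YB.
  apply: measurable_funD; first by apply: measurable_indic; exact: GGB.
  apply: measurable_funM; first exact: measurable_cst.
  by apply: measurable_indic; exact: GnGam.
have mYAg : measurable_fun (setT : set gT) YA by apply/gmeasP.
have mGB : measurable (Gam `&` B) by exact: measurableI.
have mnG : measurable (~` Gam) by exact: measurableC.
have YBE : (fun w => (YB w)%:E) = (fun w => (\1_(Gam `&` B) w)%:E) \+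
    (fun w => pb%:E * (\1_(~` Gam) w)%:E)%E.
  by apply: funext => w; rewrite /YB EFinD EFinM.
have iB1 : P.-integrable setT (fun w => (\1_(Gam `&` B) w)%:E) by exact: (integrable_indic P mGB).
have iB2 : P.-integrable setT (fun w => pb%:E * (\1_(~` Gam) w)%:E)%E.
  exact: (integrableZl measurableT pb (integrable_indic P mnG)).
have iYB : P.-integrable setT (fun w => (YB w)%:E) by rewrite YBE; exact: integrableD.
have iA1 := int_indicM YA _ iYA mGB.
have iA2 := int_indicM YA _ iYA mnG.
have iA2' : P.-integrable setT (fun w => pb%:E * (YA w * \1_(~` Gam) w)%:E)%E.
  exact: (integrableZl measurableT pb iA2).
have YABE : (fun w => ((YA \* YB) w)%:E) = (fun w => (YA w * \1_(Gam `&` B) w)%:E) \+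
    (fun w => pb%:E * (YA w * \1_(~` Gam) w)%:E)%E.
  apply: funext => w; rewrite /YB /= -EFinM -EFinD; congr (_%:E).
  by rewrite mulrDr mulrCA.
have iYAB : P.-integrable setT (fun w => ((YA \* YB) w)%:E) by rewrite YABE; exact: integrableD.
exists YA, YB; split.
- by split.
- split => //; first by apply/gmeasP.
  move=> C GC; have mC := HG _ GC.
  rewrite YBE integralD //; last 2 first.
  + exact: (integrableS measurableT mC (@subsetT _ _) iB1).
  + exact: (integrableS measurableT mC (@subsetT _ _) iB2).
  rewrite (integralZl mC (integrableS measurableT mC (@subsetT _ _) (integrable_indic P mnG))).
  rewrite !integral_indic // -PBE.
  change (P (Gam `&` B `&` C) + P B * P (~` Gam `&` C) = P (B `&` C))%E.
  rewrite (_ : ~` Gam `&` C = C `&` ~` Gam); last by rewrite setIC.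
  rewrite -ind2 //.
  rewrite (measure_split ( B `&` C) Gam); last 2 first.
  + exact: measurableI.
  + exact: mGam.
  congr (_ + _)%E; congr (P _); setsolve.
- split => //.
    apply/gmeasP; exact: measurable_funM.
  move=> C GC; have mC := HG _ GC.
  rewrite YABE integralD //; last 2 first.
  + exact: (integrableS measurableT mC (@subsetT _ _) iA1).
  + exact: (integrableS measurableT mC (@subsetT _ _) iA2').
  rewrite (integralZl mC (integrableS measurableT mC (@subsetT _ _) iA2)).
  rewrite !integral_indicM.
  have GC1 : sigma_gen Ggen (C `&` (Gam `&` B)) by exact: (@measurableI _ gT).
  have GC2 : sigma_gen Ggen (C `&` ~` Gam) by exact: (@measurableI _ gT).
  rewrite (eYA _ GC1) (eYA _ GC2) !integral_indic //; last 3 first.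
  + exact: measurableI.
  + exact: HG.
  + exact: HG.
  rewrite -PBE.
  change (P (A `&` (C `&` (Gam `&` B))) + P B * P (A `&` (C `&` ~` Gam)) =
    P (A `&` B `&` C))%E.
  have -> : (P B * P (A `&` (C `&` ~` Gam)))%E = P (A `&` B `&` C `&` ~` Gam).
    by rewrite ind1 //; congr (_ * P _)%E; setsolve.
  rewrite (measure_split ( A `&` B `&` C) Gam); last 2 first.
  + by apply: measurableI => //; exact: measurableI.
  + exact: mGam.
  congr (_ + _)%E; congr (P _); setsolve.
Qed.

End Main.


Section Indep.
Context {d : measure_display} {Omega : measurableType d} {R : realType}.
Variable P : probability Omega R.
Variables (I : eqType) (S : set I) (F : I -> set (set Omega)).
Hypothesis indep : mutually_independent P S F.
Hypothesis Fm : forall i E, F i E -> measurable E.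
Hypothesis FI : forall i E1 E2, F i E1 -> F i E2 -> F i (E1 `&` E2).
Hypothesis FT : forall i, F i setT.
Variable i0 : I.
Hypothesis Si0 : S i0.

Definition Fgen_ex := [set E | exists i, [/\ S i, i != i0 & F i E]].

Let PiS := [set D : set Omega | exists (J : seq I) (Af : I -> set Omega),
   [/\ uniq J, (forall j, j \in J -> [/\ S j, j != i0 & F j (Af j)]) &
       D = [set w | forall j, j \in J -> Af j w]]].

Let inter_meas (J : seq I) (Af : I -> set Omega) :
  (forall j, j \in J -> measurable (Af j)) ->
  measurable [set w | forall j, j \in J -> Af j w].
Proof.
elim: J => [_|j J IH hJ].
  rewrite (_ : [set w | _] = setT); first exact: measurableT.
  by apply/seteqP; split => w //= _ j; rewrite in_nil.
rewrite (_ : [set w | _] = Af j `&` [set w | forall j0, j0 \in J -> Af j0 w]).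
  apply: measurableI; first by apply: hJ; rewrite mem_head.
  by apply: IH => j0 j0J; apply: hJ; rewrite in_cons j0J orbT.
apply/seteqP; split => w /=.
  by move=> h; split => [|j0 j0J]; apply: h; rewrite in_cons ?eqxx ?j0J ?orbT.
by move=> [hj hJ'] j0; rewrite in_cons => /orP[/eqP->|/hJ'].
Qed.

Let PiS_setI : setI_closed PiS.
Proof.
move=> _ _ [J1 [A1 [u1 h1 ->]]] [J2 [A2 [u2 h2 ->]]].
exists (undup (J1 ++ J2)), (fun j => (if j \in J1 then A1 j else setT) `&`
                                     (if j \in J2 then A2 j else setT)).
split; first exact: undup_uniq.
- move=> j; rewrite mem_undup mem_cat => hj.
  have [S_j ji0] : S j /\ j != i0.
    by case/orP: hj => [/h1|/h2] [].
  split => //; apply: FI.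
  + by case: ifPn => [/h1[]//|_]; exact: FT.
  + by case: ifPn => [/h2[]//|_]; exact: FT.
- apply/seteqP; split => w /=.
  + move=> [H1 H2] j; rewrite mem_undup mem_cat => _; split.
    * by case: ifPn => // /H1.
    * by case: ifPn => // /H2.
  + move=> H; split => j jJ.
    * by have := H j; rewrite mem_undup mem_cat jJ /= => /(_ isT) [].
    * by have := H j; rewrite mem_undup mem_cat jJ orbT => /(_ isT) [_].
Qed.

Let Fgen_PiS : Fgen_ex `<=` PiS.
Proof.
move=> E [i [Si ii0 FiE]]; exists [:: i], (fun _ => E); split => //.
- by move=> j; rewrite mem_seq1 => /eqP ->.
- apply/seteqP; split => w /=; first by move=> Ew j.
  by move=> /(_ i); rewrite mem_head; apply.
Qed.

Variable B : set Omega.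
Hypothesis FB : F i0 B.
Let mB : measurable B. Proof. exact: Fm FB. Qed.

Let H := [set D | measurable D /\ P (D `&` B) = (P D * P B)%E].

Let PiS_H : PiS `<=` H.
Proof.
move=> _ [J [Af [uJ hJ ->]]]; split.
  by apply: inter_meas => j /hJ [_ _ /Fm].
have i0J : i0 \notin J by apply/negP => /hJ [_ /eqP].
pose A' j := if j == i0 then B else Af j.
have e1 := indep (i0 :: J) A'.
have e2 := indep J Af.
rewrite (_ : [set w | forall j, j \in J -> Af j w] `&` B =
             [set w | forall j, j \in i0 :: J -> A' j w]); last first.
  apply/seteqP; split => w /=.
  - move=> [h hB] j; rewrite in_cons /A'; case: eqP => [//|_] /= jJ.
    exact: h.
  - move=> h; split.
      move=> j jJ; have := h j; rewrite in_cons jJ orbT /A' => /(_ isT).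
      by case: eqP => // ji0; move: jJ; rewrite ji0 (negbTE i0J).
    by have := h i0; rewrite mem_head /A' eqxx => /(_ isT).
rewrite e1; last 2 first.
  - by rewrite /= i0J uJ.
  - move=> j; rewrite in_cons /A'; case: eqP => [-> _|_ /= /hJ [] //].
    by split.
rewrite e2 //; last by move=> j /hJ [].
rewrite big_cons /A' eqxx muleC; congr (_ * _)%E.
apply: eq_big_seq => j /hJ [_ ji0 _].
by rewrite ifN.
Qed.

Let fin_eq (x y : \bar R) : x \is a fin_num -> y \is a fin_num ->
  fine x = fine y -> x = y.
Proof. by move=> fx fy e; rewrite -(fineK fx) -(fineK fy) e. Qed.

Let H_dynkin : dynkin H.
Proof.
split.
- split; first exact: measurableT.
  by rewrite setTI probability_setT mul1e.
- move=> D [mD hD]; split; first exact: measurableC.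
  have mnD : measurable (~` D) by exact: measurableC.
  have h1 : P B = (P (D `&` B) + P (~` D `&` B))%E.
    rewrite -measureU; [|exact: measurableI|exact: measurableI|].
      by rewrite -setIUl setUv setTI.
    by rewrite setIACA setICr set0I.
  have h2 : P setT = (P D + P (~` D))%E.
    by rewrite -measureU // ?setUv // setICr.
  rewrite probability_setT hD in h2 h1.
  apply: fin_eq; rewrite ?fin_numM ?fin_num_measure //; try exact: measurableI.
  move: (congr1 fine h1) (congr1 fine h2).
  rewrite !fineD ?fin_numM ?fin_num_measure //; try exact: measurableI.
  rewrite !fineM ?fin_num_measure //; try exact: measurableI.
  rewrite /=.
  move=> e1 e2.
  have -> : fine (P (~` D)) = 1 - fine (P D) by lra.
  lra.
- move=> Fn tF hF; split.
    by apply: bigcup_measurable => k _; case: (hF k).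
  have mF k : measurable (Fn k) by case: (hF k).
  rewrite setI_bigcupl !measure_bigcup //; last 2 first.
  + by move=> k _; exact: measurableI.
  + apply/trivIsetP => i j _ _ ij.
    move/trivIsetP : tF => /(_ i j Logic.I Logic.I ij).
    by rewrite setIACA => ->; rewrite set0I.
  rewrite (@eq_eseriesr _ _ (fun k => (fine (P B))%:E * P (Fn k))%E); last first.
    by move=> k _; apply: (etrans (proj2 (hF k))); rewrite muleC fineK // fin_num_measure.
  rewrite nneseriesZl; last by move=> k _; exact: measure_ge0.
  by rewrite muleC fineK // fin_num_measure.
Qed.

Lemma indep_rest D : sigma_gen Fgen_ex D -> P (D `&` B) = (P D * P B)%E.
Proof.
move=> GD.
have sub : <<s setT, PiS>> `<=` H.
  apply: lambda_system_subset => //.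
  by apply/dynkin_lambda_system; exact: H_dynkin.
have := @sub_smallest2r _ (sigma_algebra setT) Fgen_ex PiS
  (smallest_sigma_algebra setT PiS) Fgen_PiS D GD.
by move=> /sub [].
Qed.

End Indep.


Section SG.
Context {d0 : measure_display} {Omega : measurableType d0}.
Implicit Types G : set (set Omega).

Lemma sg_setI G X Y : sigma_gen G X -> sigma_gen G Y -> sigma_gen G (X `&` Y).
Proof. exact: (@measurableI _ (g_sigma_algebraType G)). Qed.
Lemma sg_setT G : sigma_gen G setT.
Proof. exact: (@measurableT _ (g_sigma_algebraType G)). Qed.
Lemma sg_set0 G : sigma_gen G set0.
Proof. exact: (@measurable0 _ (g_sigma_algebraType G)). Qed.
Lemma sg_setC G X : sigma_gen G X -> sigma_gen G (~` X).
Proof. exact: (@measurableC _ (g_sigma_algebraType G)). Qed.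
Lemma sg_gen G X : G X -> sigma_gen G X.
Proof. exact: sub_gen_smallest. Qed.
Lemma sg_sub G G' : G `<=` sigma_gen G' -> sigma_gen G `<=` sigma_gen G'.
Proof. by move=> h; apply: smallest_sub => //; exact: smallest_sigma_algebra. Qed.

Lemma sg_trace G1 G2 (Gm : set Omega) : sigma_gen G2 Gm ->
  (forall E, G1 E -> sigma_gen G2 (E `&` Gm)) ->
  forall D, sigma_gen G1 D -> sigma_gen G2 (D `&` Gm).
Proof.
move=> G2m hE; apply: smallest_sub => //; split => /=.
- by rewrite set0I; exact: (sg_set0 G2).
- move=> D hD; rewrite setTD.
  rewrite (_ : ~` D `&` Gm = Gm `&` ~` (D `&` Gm)).
    by apply: sg_setI => //; exact: sg_setC.
  by apply/seteqP; split => w /=; tauto.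
- move=> Fn hF; rewrite setI_bigcupl.
  by apply: (@bigcup_measurable _ (g_sigma_algebraType G2)) => k _; exact: hF.
Qed.
End SG.

Lemma sg_meas d (Omega : measurableType d) (G : set (set Omega)) :
  G `<=` measurable -> sigma_gen G `<=` measurable.
Proof. by move=> h; apply: smallest_sub => //; exact: sigma_algebra_measurable. Qed.

Lemma vec_wrtP {d0 : measure_display} {Omega : measurableType d0} {R : realType} (G : set (set Omega)) n
    (X : Omega -> 'cV[R]_n) :
  vec_meas_wrt (sigma_gen G) X <->
  forall i, measurable_fun (setT : set (g_sigma_algebraType G)) (fun w => X w i ord0).
Proof.
split => [h i _ B mB|h i B mB]; first by rewrite setTI; exact: h.
by have := h i measurableT B mB; rewrite setTI.
Qed.

Lemma vec_wrt_ev {d0 : measure_display} {Omega : measurableType d0} {R : realType} (G : set (set Omega)) n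
    (X : Omega -> 'cV[R]_n) :
  vec_meas_wrt (sigma_gen G) X -> ev_vec X `<=` sigma_gen G.
Proof. by move=> h _ [i [B [mB ->]]]; exact: h. Qed.

Section MeasGen.
Context {d : measure_display} {T : measurableType d} {R : realType}.

Lemma meas_fin2 (K0 K1 : finType) (M0 : T -> K0) (M1 : T -> K1) (g : K0 -> K1 -> R) :
  (forall k, measurable (M0 @^-1` [set k])) ->
  (forall k, measurable (M1 @^-1` [set k])) ->
  measurable_fun setT (fun w => g (M0 w) (M1 w)).
Proof.
move=> h0 h1 _ B mB; rewrite setTI.
rewrite (_ : _ @^-1` B = \bigcup_(k in [set k : K0 * K1 | B (g k.1 k.2)])
    (M0 @^-1` [set k.1] `&` M1 @^-1` [set k.2])).
  apply: fin_bigcup_measurable; first exact: finite_finset.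
  by move=> k _; apply: measurableI.
apply/seteqP; split => w /=.
  by move=> Bw; exists (M0 w, M1 w).
by move=> [[k0 k1] /= Bk [/= e0 e1]]; rewrite e0 e1.
Qed.

Lemma dyn_meas (K0 K1 : finType) n0 n1 m0 m1
  (Am : K0 -> K1 -> 'M[R]_(n0 + n1)) (Bm : K0 -> K1 -> 'M[R]_(n0 + n1, m0 + m1))
  (M0 : T -> K0) (M1 : T -> K1) (x0 : T -> 'cV[R]_n0) (x1 : T -> 'cV[R]_n1)
  (u0 : T -> 'cV[R]_m0) (u1 : T -> 'cV[R]_m1)
  (w0 : T -> 'cV[R]_n0) (w1 : T -> 'cV[R]_n1) :
  (forall k, measurable (M0 @^-1` [set k])) ->
  (forall k, measurable (M1 @^-1` [set k])) ->
  (forall i, measurable_fun setT (fun w => x0 w i ord0)) ->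
  (forall i, measurable_fun setT (fun w => x1 w i ord0)) ->
  (forall i, measurable_fun setT (fun w => u0 w i ord0)) ->
  (forall i, measurable_fun setT (fun w => u1 w i ord0)) ->
  (forall i, measurable_fun setT (fun w => w0 w i ord0)) ->
  (forall i, measurable_fun setT (fun w => w1 w i ord0)) ->
  forall r, measurable_fun setT (fun w =>
    (Am (M0 w) (M1 w) *m col_mx (x0 w) (x1 w)
     + Bm (M0 w) (M1 w) *m col_mx (u0 w) (u1 w) + col_mx (w0 w) (w1 w)) r ord0).
Proof.
move=> h0 h1 hx0 hx1 hu0 hu1 hw0 hw1.
have colm n n' (a : T -> 'cV[R]_n) (b : T -> 'cV[R]_n') :
    (forall i, measurable_fun setT (fun w => a w i ord0)) ->
    (forall i, measurable_fun setT (fun w => b w i ord0)) ->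
    forall j, measurable_fun setT (fun w => col_mx (a w) (b w) j ord0).
  move=> ha hb j; rewrite -[j](@splitK n n'); case: (fintype.split j) => j' /=.
  - rewrite (_ : (fun w => _) = (fun w => a w j' ord0)) //.
    by apply: funext => w; rewrite col_mxEu.
  - rewrite (_ : (fun w => _) = (fun w => b w j' ord0)) //.
    by apply: funext => w; rewrite col_mxEd.
have mulm k (M : K0 -> K1 -> 'M[R]_(n0 + n1, k)) (v : T -> 'cV[R]_k) :
    (forall j, measurable_fun setT (fun w => v w j ord0)) ->
    forall r, measurable_fun setT (fun w => (M (M0 w) (M1 w) *m v w) r ord0).
  move=> hv r.
  rewrite (_ : (fun w => _) = (fun w => \sum_(j <- index_enum 'I_k)
                (fun j w => M (M0 w) (M1 w) r j * v w j ord0) j w)); last first.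
    by apply: funext => w; rewrite mxE.
  apply: measurable_sum => j; apply: measurable_funM => //.
  exact: (meas_fin2 _ _ M0 M1 (fun k0 k1 => M k0 k1 r j) h0 h1).
move=> r.
rewrite (_ : (fun w => _) = (fun w =>
   (Am (M0 w) (M1 w) *m col_mx (x0 w) (x1 w)) r ord0
   + (Bm (M0 w) (M1 w) *m col_mx (u0 w) (u1 w)) r ord0
   + col_mx (w0 w) (w1 w) r ord0)); last first.
  by apply: funext => w; rewrite !mxE.
apply: measurable_funD; [apply: measurable_funD|].
- by apply: mulm; apply: colm.
- by apply: mulm; apply: colm.
- exact: colm.
Qed.
End MeasGen.



Section EvMeas.
Context {d : measure_display} {Omega : measurableType d} {R : realType}.
Lemma ev_vec_meas n (X : Omega -> 'cV[R]_n) : meas_vec X -> ev_vec X `<=` measurable.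
Proof. by move=> h _ [i [B [mB ->]]]; have := h i measurableT B mB; rewrite setTI. Qed.
Lemma ev_fin_meas (K : finType) (M : Omega -> K) : meas_fin M -> ev_fin M `<=` measurable.
Proof. by move=> h _ [k ->]; exact: h. Qed.
Lemma ev_bool_meas (g : Omega -> bool) : meas_bool g -> ev_bool g `<=` measurable.
Proof. by move=> h _ ->. Qed.
Lemma vec_wrt_mono (G G' : set (set Omega)) n (X : Omega -> 'cV[R]_n) :
  G `<=` sigma_gen G' -> vec_meas_wrt (sigma_gen G) X -> vec_meas_wrt (sigma_gen G') X.
Proof. by move=> h hX i B mB; apply: (sg_sub _ _ h); exact: hX. Qed.
End EvMeas.

Section Model.
Context {d : measure_display} {Omega : measurableType d} {R : realType}.
Variable P : probability Omega R.
Variables (T n0 n1 m0 m1 : nat) (K0 K1 : finType).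
Variables (Am : K0 -> K1 -> 'M[R]_(n0 + n1)) (Bm : K0 -> K1 -> 'M[R]_(n0 + n1, m0 + m1)).
Variables (X0 : nat -> Omega -> 'cV[R]_n0) (X1 : nat -> Omega -> 'cV[R]_n1)
  (U0 : nat -> Omega -> 'cV[R]_m0) (U1 : nat -> Omega -> 'cV[R]_m1)
  (W0 : nat -> Omega -> 'cV[R]_n0) (W1 : nat -> Omega -> 'cV[R]_n1)
  (M0 : nat -> Omega -> K0) (M1 : nat -> Omega -> K1) (Gam : nat -> Omega -> bool).
Hypotheses (hX00 : meas_vec (X0 0%N)) (hX10 : meas_vec (X1 0%N))
  (hW0 : forall t, meas_vec (W0 t)) (hW1 : forall t, meas_vec (W1 t))
  (hM0 : forall t, meas_fin (M0 t)) (hM1 : forall t, meas_fin (M1 t))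
  (hGam : forall t, meas_bool (Gam t)).
Hypothesis hind : mutually_independent P (prim_upto T)
    (prim_sigma (X0 0%N) (X1 0%N) W0 W1 M0 M1 Gam).
Hypothesis hdyn : forall t w, (t <= T)%N ->
     col_mx (X0 t.+1 w) (X1 t.+1 w) =
       Am (M0 t w) (M1 t w) *m col_mx (X0 t w) (X1 t w)
       + Bm (M0 t w) (M1 t w) *m col_mx (U0 t w) (U1 t w)
       + col_mx (W0 t w) (W1 t w).
Hypothesis hU0 : forall t, (t <= T)%N ->
     vec_meas_wrt (sigma_gen (common_info_gen X0 X1 M0 M1 Gam U0 t)) (U0 t).
Hypothesis hU1 : forall t, (t <= T)%N ->
     vec_meas_wrt (sigma_gen (common_info_gen X0 X1 M0 M1 Gam U0 t
                              `|` ev_vec (X1 t) `|` ev_fin (M1 t))) (U1 t).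
Variable t : nat.
Hypothesis tT : (t <= T)%N.

Let Fp := prim_sigma (X0 0%N) (X1 0%N) W0 W1 M0 M1 Gam.
Let i0 : prim_index := inr (inl (true, t)).
Let Fgen := Fgen_ex prim_index (prim_upto T) Fp i0.
Let Fs := sigma_gen Fgen.
Let FTy := g_sigma_algebraType Fgen.

Let Fp_sg i : exists G, Fp i = sigma_gen G /\ G `<=` measurable.
Proof.
case: i => [[[]|[[] s]]|[[[] s]|s]]; eexists; split; try reflexivity.
- exact: ev_vec_meas.
- exact: ev_vec_meas.
- exact: ev_vec_meas.
- exact: ev_vec_meas.
- exact: ev_fin_meas.
- exact: ev_fin_meas.
- exact: ev_bool_meas.
Qed.

Let Fm i E : Fp i E -> measurable E.
Proof. by have [G [-> hG]] := Fp_sg i; apply: sg_meas. Qed.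
Let FI i E1 E2 : Fp i E1 -> Fp i E2 -> Fp i (E1 `&` E2).
Proof. by have [G [-> hG]] := Fp_sg i; exact: sg_setI. Qed.
Let FT i : Fp i setT.
Proof. by have [G [-> hG]] := Fp_sg i; exact: sg_setT. Qed.

Let Fs_meas : Fs `<=` measurable.
Proof. by apply: sg_meas => E [i [_ _ hE]]; exact: Fm hE. Qed.

Let prim_in i : prim_upto T i -> i != i0 -> Fp i `<=` Fs.
Proof. by move=> Si ne E hE; apply: sg_gen; exists i. Qed.

Let vec_prim i n (X : Omega -> 'cV[R]_n) : prim_upto T i -> i != i0 ->
  Fp i = sigma_gen (ev_vec X) -> vec_meas_wrt Fs X.
Proof.
move=> Si ne e j B mB; apply: (@prim_in _ Si ne); rewrite e.
by apply: sg_gen; exists j, B.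
Qed.

Let fin_prim i (K : finType) (M : Omega -> K) : prim_upto T i -> i != i0 ->
  Fp i = sigma_gen (ev_fin M) -> forall k, Fs (M @^-1` [set k]).
Proof.
move=> Si ne e k; apply: (@prim_in _ Si ne); rewrite e.
by apply: sg_gen; exists k.
Qed.

Let bool_prim i (g : Omega -> bool) : prim_upto T i -> i != i0 ->
  Fp i = sigma_gen (ev_bool g) -> Fs (g @^-1` [set true]).
Proof.
move=> Si ne e; apply: (@prim_in _ Si ne); rewrite e.
by apply: sg_gen.
Qed.

Let X00F : vec_meas_wrt Fs (X0 0%N).
Proof. by apply: (@vec_prim (inl (inl false))). Qed.
Let X10F : vec_meas_wrt Fs (X1 0%N).
Proof. by apply: (@vec_prim (inl (inl true))). Qed.
Let W0F s : (s <= T)%N -> vec_meas_wrt Fs (W0 s).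
Proof. by move=> sT; apply: (@vec_prim (inl (inr (false, s)))). Qed.
Let W1F s : (s <= T)%N -> vec_meas_wrt Fs (W1 s).
Proof. by move=> sT; apply: (@vec_prim (inl (inr (true, s)))). Qed.
Let M0F s : (s <= T)%N -> forall k, Fs (M0 s @^-1` [set k]).
Proof. by move=> sT; apply: (@fin_prim (inr (inl (false, s)))). Qed.
Let M1F s : (s <= T)%N -> s != t -> forall k, Fs (M1 s @^-1` [set k]).
Proof.
move=> sT st; apply: (@fin_prim (inr (inl (true, s)))) => //.
Qed.
Let GamF s : (s <= T)%N -> Fs (Gam s @^-1` [set true]).
Proof. by move=> sT; apply: (@bool_prim (inr (inr s))). Qed.


Let Hg s := common_info_gen X0 X1 M0 M1 Gam U0 s.
Let Gm := Gam t @^-1` [set true].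

Let Q s := (forall s', (s' <= s)%N -> vec_meas_wrt Fs (X0 s') /\ vec_meas_wrt Fs (X1 s')) /\
           (forall s', (s' < s)%N -> vec_meas_wrt Fs (U0 s') /\ vec_meas_wrt Fs (U1 s')).

Let genH s : (s <= t)%N -> Q s -> forall E, Hg s E ->
  Fs E \/ (s = t /\ exists k, E = Gm `&` (M1 t @^-1` [set k])).
Proof.
move=> st [QX QU] E [s' [s's hE]].
have s'T : (s' <= T)%N by lia.
case: hE => [hE|[hE|[hE|[hE|[hE|[s's' hE]]]]]].
- by left; exact: (vec_wrt_ev _ _ _ (proj1 (QX _ s's)) _ hE).
- by left; case: hE => k ->; exact: M0F.
- by left; rewrite hE; exact: GamF.
- left; case: hE => E' [hE' ->]; apply: sg_setI; first exact: GamF.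
  exact: (vec_wrt_ev _ _ _ (proj2 (QX _ s's)) _ hE').
- case: hE => E' [[k ->] ->].
  have [s't|s't] := eqVneq s' t.
    right; split; first by move: s's st; rewrite s't; lia.
    by exists k; rewrite s't.
  left; apply: sg_setI; first exact: GamF.
  exact: M1F.
- by left; exact: (vec_wrt_ev _ _ _ (proj1 (QU _ s's')) _ hE).
Qed.

Let Q_all s : (s <= t)%N -> Q s.
Proof.
elim: s => [_|s IH st1].
  split => [s'|s' //].
  by rewrite leqn0 => /eqP ->; split.
have st : (s <= t)%N by lia.
have sT : (s <= T)%N by lia.
have [QX QU] := IH st.
have hH : Hg s `<=` Fs.
  move=> E /(genH s st (conj QX QU)) [//|[est _]].
  by move: st1; rewrite est; lia.
have U0s : vec_meas_wrt Fs (U0 s) by exact: (vec_wrt_mono _ _ _ _ hH (hU0 s sT)).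
have Xs := QX s (leqnn s).
have U1s : vec_meas_wrt Fs (U1 s).
  apply: (vec_wrt_mono _ _ _ _ _ (hU1 s sT)).
  move=> E [[/hH //|hE]|hE].
  - exact: (vec_wrt_ev _ _ _ (proj2 Xs) _ hE).
  - case: hE => k ->; apply: M1F => //.
    by apply/eqP => est; move: st1; rewrite est; lia.
have dm r : measurable_fun (setT : set FTy) (fun w =>
    (Am (M0 s w) (M1 s w) *m col_mx (X0 s w) (X1 s w)
     + Bm (M0 s w) (M1 s w) *m col_mx (U0 s w) (U1 s w)
     + col_mx (W0 s w) (W1 s w)) r ord0).
  apply: (@dyn_meas _ FTy R K0 K1 n0 n1 m0 m1 Am Bm (M0 s) (M1 s) (X0 s) (X1 s)
    (U0 s) (U1 s) (W0 s) (W1 s)).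
  - exact: M0F.
  - by apply: M1F => //; apply/eqP => est; move: st1; rewrite est; lia.
  - by apply/vec_wrtP; exact: (proj1 Xs).
  - by apply/vec_wrtP; exact: (proj2 Xs).
  - by apply/vec_wrtP.
  - by apply/vec_wrtP.
  - by apply/vec_wrtP; exact: W0F.
  - by apply/vec_wrtP; exact: W1F.
have X0s1 : vec_meas_wrt Fs (X0 s.+1).
  apply/vec_wrtP => i.
  have e : forall w, X0 s.+1 w i ord0 = (Am (M0 s w) (M1 s w) *m col_mx (X0 s w) (X1 s w)
     + Bm (M0 s w) (M1 s w) *m col_mx (U0 s w) (U1 s w)
     + col_mx (W0 s w) (W1 s w)) (lshift n1 i) ord0.
    by move=> w; rewrite -hdyn // col_mxEu.
  by rewrite (funext e); exact: dm.
have X1s1 : vec_meas_wrt Fs (X1 s.+1).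
  apply/vec_wrtP => i.
  have e : forall w, X1 s.+1 w i ord0 = (Am (M0 s w) (M1 s w) *m col_mx (X0 s w) (X1 s w)
     + Bm (M0 s w) (M1 s w) *m col_mx (U0 s w) (U1 s w)
     + col_mx (W0 s w) (W1 s w)) (rshift n0 i) ord0.
    by move=> w; rewrite -hdyn // col_mxEd.
  by rewrite (funext e); exact: dm.
split => s'.
- rewrite leq_eqVlt => /orP[/eqP ->|]; first by split.
  by rewrite ltnS => /QX.
- rewrite ltnS leq_eqVlt => /orP[/eqP ->|]; first by split.
  exact: QU.
Qed.


Lemma main_t : cond_indep P (sigma_gen (Hg t)) (sigma_gen (ev_vec (X1 t)))
  (sigma_gen (ev_fin (M1 t))).
Proof.
have [QX QU] := Q_all t (leqnn t).
have gH := genH t (leqnn t) (conj QX QU).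
have GmF : Fs Gm by exact: GamF.
have HG : forall C, sigma_gen (Hg t) C -> measurable C.
  apply: sg_meas => E /gH [/Fs_meas //|[_ [k ->]]].
  by apply: measurableI; [exact: hGam|exact: hM1].
have trace : forall C, sigma_gen (Hg t) C -> Fs (C `&` ~` Gm).
  apply: sg_trace; first exact: sg_setC.
  move=> E /gH [FE|[_ [k ->]]]; first by apply: sg_setI => //; exact: sg_setC.
  rewrite (_ : _ `&` _ = set0); first exact: sg_set0.
  by apply/seteqP; split => w //= [[]].
have X1tF := proj2 (QX t (leqnn t)).
move=> A B GA GB.
have AF : Fs A by apply: (sg_sub _ _ (vec_wrt_ev _ _ _ X1tF)).
have mA := Fs_meas A AF.
have mB : measurable B by exact: (sg_meas _ _ _ (ev_fin_meas _ _ (hM1 t)) B GB).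
have GmG : sigma_gen (Hg t) Gm.
  apply: sg_gen; exists t; split => //; do 2 right; left; reflexivity.
have GmB : sigma_gen (Hg t) (Gm `&` B).
  rewrite setIC; apply: (sg_trace _ _ _ GmG) GB => E [k ->].
  apply: sg_gen; exists t; split => //; do 4 right; left.
  by exists (M1 t @^-1` [set k]); split; [exists k | rewrite setIC].
have FB : Fp i0 B by [].
have Si0 : prim_upto T i0 by [].
have ir := @indep_rest _ _ _ P prim_index (prim_upto T) Fp hind Fm FI FT i0 Si0 B FB.
apply: (@main_abstract _ _ _ P (Hg t) HG Gm A B GmG mA mB GmB).
- move=> C GC.
  have := ir (A `&` (C `&` ~` Gm)) (sg_setI _ _ _ AF (trace C GC)).
  rewrite (_ : A `&` (C `&` ~` Gm) `&` B = A `&` B `&` C `&` ~` Gm); last by setsolve.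
  rewrite (_ : A `&` (C `&` ~` Gm) = A `&` C `&` ~` Gm); last by setsolve.
  by move=> ->; rewrite muleC.
- move=> C GC.
  have := ir (C `&` ~` Gm) (trace C GC).
  rewrite (_ : C `&` ~` Gm `&` B = B `&` C `&` ~` Gm); last by setsolve.
  by move=> ->; rewrite muleC.
Qed.

End Model.

Theorem lemma3 (R : realType) (d : measure_display) (Omega : measurableType d)
  (P : probability Omega R)
  (T n0 n1 m0 m1 : nat) (K0 K1 : finType)
  (A : K0 -> K1 -> 'M[R]_(n0 + n1)) (B : K0 -> K1 -> 'M[R]_(n0 + n1, m0 + m1))
  (X0 : nat -> Omega -> 'cV[R]_n0) (X1 : nat -> Omega -> 'cV[R]_n1)
  (U0 : nat -> Omega -> 'cV[R]_m0) (U1 : nat -> Omega -> 'cV[R]_m1)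
  (W0 : nat -> Omega -> 'cV[R]_n0) (W1 : nat -> Omega -> 'cV[R]_n1)
  (M0 : nat -> Omega -> K0) (M1 : nat -> Omega -> K1)
  (Gam : nat -> Omega -> bool) (p : R) :
  (* primitive random variables are measurable *)
  meas_vec (X0 0%N) -> meas_vec (X1 0%N) ->
  (forall t, meas_vec (W0 t)) -> (forall t, meas_vec (W1 t)) ->
  (forall t, meas_fin (M0 t)) -> (forall t, meas_fin (M1 t)) ->
  (forall t, meas_bool (Gam t)) ->
  (* X_0^n, W_t^n, M_t^n, Gamma_t are mutually independent *)
  mutually_independent P (prim_upto T)
    (prim_sigma (X0 0%N) (X1 0%N) W0 W1 M0 M1 Gam) ->
  (* Gamma_t i.i.d. Bernoulli(p) *)
  0 <= p <= 1 ->
  (forall t, (t <= T)%N -> P (Gam t @^-1` [set true]) = p%:E) ->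
  (* switched linear dynamics *)
  (forall t w, (t <= T)%N ->
     col_mx (X0 t.+1 w) (X1 t.+1 w) =
       A (M0 t w) (M1 t w) *m col_mx (X0 t w) (X1 t w)
       + B (M0 t w) (M1 t w) *m col_mx (U0 t w) (U1 t w)
       + col_mx (W0 t w) (W1 t w)) ->
  (* feasible prescription strategy: U_t^0 is a function of H_t^0, and
     U_t^1 = rho_t(X_t^1, M_t^1) with rho_t a function of H_t^0 *)
  (forall t, (t <= T)%N ->
     vec_meas_wrt (sigma_gen (common_info_gen X0 X1 M0 M1 Gam U0 t)) (U0 t)) ->
  (forall t, (t <= T)%N ->
     vec_meas_wrt (sigma_gen (common_info_gen X0 X1 M0 M1 Gam U0 t
                              `|` ev_vec (X1 t) `|` ev_fin (M1 t))) (U1 t)) ->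
  (* finite second moments of all states and actions *)
  (forall t, (t <= T.+1)%N -> second_moment P (X0 t) /\ second_moment P (X1 t)) ->
  (forall t, (t <= T)%N -> second_moment P (U0 t) /\ second_moment P (U1 t)) ->
  (* conclusion *)
  forall t, (t <= T)%N ->
    cond_indep P (sigma_gen (common_info_gen X0 X1 M0 M1 Gam U0 t))
      (sigma_gen (ev_vec (X1 t))) (sigma_gen (ev_fin (M1 t))).
Proof.
move=> hX00 hX10 hW0 hW1 hM0 hM1 hGam hind _ _ hdyn hU0 hU1 _ _ t tT.
exact: (main_t P T n0 n1 m0 m1 K0 K1 A B X0 X1 U0 U1 W0 W1 M0 M1 Gam hX00 hX10 hW0 hW1 hM0 hM1 hGam hind hdyn hU0 hU1 t tT).
Qed.
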